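(* Let $n\in\mathbb{N}$ and let $m_1,\dots,m_n>0$ be arbitrary masses. Consider $n$ point particles on the real line with positions $q_1(t)<q_2(t)<\dots<q_n(t)$ (ties only at collision instants), moving freely with constant velocities between collisions and undergoing elastic binary collisions (as described in the context), with the motion considered for all times $t\in\mathbb{R}$. If the total number of collisions (over all $t\in\mathbb{R}$) is strictly smaller than $n-1$, then all particles have the same velocity, so that in fact no collision occurs at all.
   Context: Dynamics: $n$ point particles of masses $m_1,\dots,m_n>0$ move on $\mathbb{R}$; their order is preserved, i.e. $q_k(t)\le q_{k+1}(t)$ for all $t$. Between collisions each particle moves with constant velocity. A collision is an instant where $q_i=q_{i+1}$; in a binary collision of particles $i$ and $i+1$ with incoming velocities $v_i,v_{i+1}$, the outgoing velocities are $v_i'=\frac{(m_i-m_{i+1})v_i+2m_{i+1}v_{i+1}}{m_i+m_{i+1}}$, $v_{i+1}'=\frac{(m_{i+1}-m_i)v_{i+1}+2m_i v_i}{m_i+m_{i+1}}$ (conservation of momentum and kinetic energy); all other velocities are unchanged. *)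

(* Defs.v *)
From Stdlib Require Import Reals Lra Lia.
Open Scope R_scope.

(* Particles are indexed by i : nat with (i < n)%nat (i.e. 0-based: particle
   i here is particle i+1 of the paper).  A motion with k collisions is
   described by:
   - tc j   : the instant of the j-th collision (j < k), listed in time order;
   - ic j   : the collision j involves particles ic j and ic j + 1;
   - v j i  : the velocity of particle i on the j-th free-flight interval
              (j <= k), i.e. between collisions j-1 and j
              (interval 0 is (-oo, tc 0], interval k is [tc (k-1), +oo));
   - q i t  : the position of particle i at time t, for all t : R. *)

(* Outgoing velocities of an elastic binary collision. *)
Definition out_left (mi mi1 vi vi1 : R) : R :=
  ((mi - mi1) * vi + 2 * mi1 * vi1) / (mi + mi1).
Definition out_right (mi mi1 vi vi1 : R) : R :=
  ((mi1 - mi) * vi1 + 2 * mi * vi) / (mi + mi1).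

Definition in_interval (k : nat) (tc : nat -> R) (j : nat) (t : R) : Prop :=
  (j = 0%nat \/ tc (j - 1)%nat <= t) /\ (j = k \/ t <= tc j).

Definition elastic_motion (n : nat) (m : nat -> R) (k : nat)
    (tc : nat -> R) (ic : nat -> nat) (v : nat -> nat -> R)
    (q : nat -> R -> R) : Prop :=
  (* collisions are listed in time order; simultaneous collisions (at the
     same instant) concern disjoint pairs, listed left to right, so that the
     k listed collisions are k distinct collision events *)
  (forall j, (S j < k)%nat ->
     tc j < tc (S j) \/ (tc j = tc (S j) /\ (ic j + 1 < ic (S j))%nat)) /\
  (forall j i t s, (j <= k)%nat -> (i < n)%nat ->
     in_interval k tc j t -> in_interval k tc j s ->
     q i t - q i s = v j i * (t - s)) /\
  (forall i t, (S i < n)%nat -> q i t <= q (S i) t) /\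
  (forall i t, (S i < n)%nat -> q i t = q (S i) t ->
     exists j, (j < k)%nat /\ ic j = i /\ tc j = t) /\
  (forall j, (j < k)%nat ->
     (S (ic j) < n)%nat /\
     q (ic j) (tc j) = q (S (ic j)) (tc j) /\
     (ic j = 0%nat \/ q (ic j - 1)%nat (tc j) < q (ic j) (tc j)) /\
     ((S (S (ic j)) >= n)%nat \/ q (S (ic j)) (tc j) < q (S (S (ic j))) (tc j))) /\
  (forall j, (j < k)%nat ->
     let a := ic j in
     v (S j) a = out_left (m a) (m (S a)) (v j a) (v j (S a)) /\
     v (S j) (S a) = out_right (m a) (m (S a)) (v j a) (v j (S a)) /\
     (forall i, (i < n)%nat -> i <> a -> i <> S a -> v (S j) i = v j i)).

(* Main.v *)
Require Import Defs.
From Stdlib Require Import Reals Lra Lia List Classical.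
Open Scope R_scope.

Fixpoint sumr (lo len : nat) (f : nat -> R) : R :=
  match len with O => 0 | S l => f lo + sumr (S lo) l f end.

Lemma sumr_ext : forall len lo f g,
  (forall l, (lo <= l < lo + len)%nat -> f l = g l) -> sumr lo len f = sumr lo len g.
Proof.
  induction len; intros lo f g H; simpl; auto.
  rewrite (H lo) by lia. rewrite (IHlen (S lo) f g); auto. intros; apply H; lia.
Qed.

Lemma sumr_le : forall len lo f g,
  (forall l, (lo <= l < lo + len)%nat -> f l <= g l) -> sumr lo len f <= sumr lo len g.
Proof.
  induction len; intros lo f g H; simpl; [lra|].
  assert (f lo <= g lo) by (apply H; lia).
  assert (sumr (S lo) len f <= sumr (S lo) len g) by (apply IHlen; intros; apply H; lia).
  lra.
Qed.

Lemma sumr_eq_le : forall len lo f g,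
  (forall l, (lo <= l < lo + len)%nat -> f l <= g l) -> sumr lo len f = sumr lo len g ->
  forall l, (lo <= l < lo + len)%nat -> f l = g l.
Proof.
  induction len; intros lo f g H E l Hl; simpl in *; [lia|].
  assert (f lo <= g lo) by (apply H; lia).
  assert (sumr (S lo) len f <= sumr (S lo) len g) by (apply sumr_le; intros; apply H; lia).
  destruct (Nat.eq_dec l lo). subst; lra.
  apply (IHlen (S lo)); [intros; apply H; lia | lra | lia].
Qed.

Lemma sumr_scal : forall len lo (m : nat -> R) c,
  sumr lo len (fun l => m l * c) = c * sumr lo len m.
Proof. induction len; intros; simpl; [ring|]. rewrite IHlen. ring. Qed.

Lemma sumr_pos : forall len lo (m : nat -> R), (0 < len)%nat ->
  (forall l, (lo <= l < lo + len)%nat -> 0 < m l) -> 0 < sumr lo len m.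
Proof.
  induction len; intros lo m Hl H; simpl; [lia|].
  assert (0 < m lo) by (apply H; lia).
  destruct len. simpl; lra.
  assert (0 < sumr (S lo) (S len) m) by (apply IHlen; [lia| intros; apply H; lia]).
  lra.
Qed.

Lemma sumr_swap : forall a len lo f g,
  (forall l, (lo <= l < lo + len)%nat -> l <> a -> l <> S a -> f l = g l) ->
  f a + f (S a) = g a + g (S a) ->
  ((S a < lo)%nat \/ (lo + len <= a)%nat \/ ((lo <= a)%nat /\ (S a < lo + len)%nat)) ->
  sumr lo len f = sumr lo len g.
Proof.
  intros a; induction len; intros lo f g H E C; simpl; auto.
  destruct (Nat.eq_dec lo a).
  - subst. destruct len; [lia|]. simpl.
    rewrite (sumr_ext len (S (S a)) f g). lra.
    intros; apply H; lia.
  - destruct (Nat.eq_dec lo (S a)); [lia|].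
    rewrite (H lo) by lia. rewrite (IHlen (S lo) f g); auto.
    intros; apply H; lia. lia.
Qed.

Theorem mainTheorem1 (n : nat) (m : nat -> R)
    (Hm : forall i, (i < n)%nat -> 0 < m i)
    (k : nat) (tc : nat -> R) (ic : nat -> nat) (v : nat -> nat -> R)
    (q : nat -> R -> R)
    (Hmotion : elastic_motion n m k tc ic v q)
    (Hfew : (k < n - 1)%nat) :
  (forall i j, (i < n)%nat -> (j < n)%nat -> v 0%nat i = v 0%nat j) /\ k = 0%nat.
Proof.
  destruct Hmotion as (Hord & Hfree & Hle & Htie & Hcol & Hlaw).
  assert (Hex : exists i, (i < n - 1)%nat /\ forall j, (j < k)%nat -> ic j <> i).
  { apply NNPP; intro Hn.
    assert (Hinc : incl (seq 0 (n-1)) (map ic (seq 0 k))).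
    { intros x Hx. apply in_seq in Hx. apply in_map_iff.
      apply NNPP; intro Hy. apply Hn. exists x. split; [lia|].
      intros j Hj Hjx. apply Hy. exists j. split; auto. apply in_seq; lia. }
    pose proof (NoDup_incl_length (seq_NoDup (n-1) 0) Hinc).
    rewrite ?length_seq, ?length_map, ?length_seq in H. lia. }
  destruct Hex as [i [Hi Hnc]].
  assert (Hinit : forall j, (S j < n)%nat -> v 0%nat (S j) <= v 0%nat j).
  { intros j Hj. destruct (Rle_or_lt (v 0%nat (S j)) (v 0%nat j)) as [|Hd]; auto.
    exfalso. set (t0 := tc 0%nat). set (d := v 0%nat (S j) - v 0%nat j).
    set (g0 := q (S j) t0 - q j t0).
    assert (Hg0 : 0 <= g0) by (unfold g0; pose proof (Hle j t0 Hj); lra).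
    set (x := (g0 + 1) / d).
    assert (Hx : d * x = g0 + 1) by (unfold x; field; unfold d; lra).
    assert (Hxp : 0 < x) by (unfold x; apply Rdiv_lt_0_compat; unfold d; lra).
    assert (Iint : forall t, t <= t0 -> in_interval k tc 0 t).
    { intros t Ht; split; [left; reflexivity | right; exact Ht]. }
    pose proof (Hfree 0%nat (S j) (t0 - x) t0 ltac:(lia) Hj ltac:(apply Iint; lra) ltac:(apply Iint; lra)).
    pose proof (Hfree 0%nat j (t0 - x) t0 ltac:(lia) ltac:(lia) ltac:(apply Iint; lra) ltac:(apply Iint; lra)).
    pose proof (Hle j (t0 - x) Hj).
    assert (v 0%nat (S j) * (t0 - x - t0) - v 0%nat j * (t0 - x - t0) = - (d * x)) by (unfold d; ring).
    unfold g0 in *; lra. }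
  assert (Hfin : forall j, (S j < n)%nat -> v k j <= v k (S j)).
  { intros j Hj. destruct (Rle_or_lt (v k j) (v k (S j))) as [|Hd]; auto.
    exfalso. set (t0 := tc (k-1)%nat). set (d := v k j - v k (S j)).
    set (g0 := q (S j) t0 - q j t0).
    assert (Hg0 : 0 <= g0) by (unfold g0; pose proof (Hle j t0 Hj); lra).
    set (x := (g0 + 1) / d).
    assert (Hx : d * x = g0 + 1) by (unfold x; field; unfold d; lra).
    assert (Hxp : 0 < x) by (unfold x; apply Rdiv_lt_0_compat; unfold d; lra).
    assert (Iint : forall t, t0 <= t -> in_interval k tc k t).
    { intros t Ht; split; [right; exact Ht | left; reflexivity]. }
    pose proof (Hfree k (S j) (t0 + x) t0 ltac:(lia) Hj ltac:(apply Iint; lra) ltac:(apply Iint; lra)).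
    pose proof (Hfree k j (t0 + x) t0 ltac:(lia) ltac:(lia) ltac:(apply Iint; lra) ltac:(apply Iint; lra)).
    pose proof (Hle j (t0 + x) Hj).
    assert (v k (S j) * (t0 + x - t0) - v k j * (t0 + x - t0) = - (d * x)) by (unfold d; ring).
    unfold g0 in *; lra. }
  assert (Hinit2 : forall dd j, (j + dd < n)%nat -> v 0%nat (j + dd)%nat <= v 0%nat j).
  { induction dd; intros j Hj. rewrite Nat.add_0_r; lra.
    replace (j + S dd)%nat with (S (j + dd)) by lia.
    pose proof (Hinit (j + dd)%nat ltac:(lia)). pose proof (IHdd j ltac:(lia)). lra. }
  assert (Hfin2 : forall dd j, (j + dd < n)%nat -> v k j <= v k (j + dd)%nat).
  { induction dd; intros j Hj. rewrite Nat.add_0_r; lra.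
    replace (j + S dd)%nat with (S (j + dd)) by lia.
    pose proof (Hfin (j + dd)%nat ltac:(lia)). pose proof (IHdd j ltac:(lia)). lra. }
  set (PL := fun j => sumr 0 (S i) (fun l => m l * v j l)).
  set (PR := fun j => sumr (S i) (n - S i) (fun l => m l * v j l)).
  assert (Hcons : forall j, (j <= k)%nat -> PL j = PL 0%nat /\ PR j = PR 0%nat).
  { induction j; intros Hj; [auto|].
    destruct (IHj ltac:(lia)) as [E1 E2].
    pose proof (Hlaw j ltac:(lia)) as HL. cbv zeta in HL. destruct HL as (H1 & H2 & H3).
    destruct (Hcol j ltac:(lia)) as (Ha & _).
    pose proof (Hnc j ltac:(lia)) as Hai.
    assert (Hpa : 0 < m (ic j)) by (apply Hm; lia).
    assert (Hpb : 0 < m (S (ic j))) by (apply Hm; lia).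
    assert (Esum : m (ic j) * v (S j) (ic j) + m (S (ic j)) * v (S j) (S (ic j)) =
                   m (ic j) * v j (ic j) + m (S (ic j)) * v j (S (ic j))).
    { rewrite H1, H2. unfold out_left, out_right. field. lra. }
    split.
    - rewrite <- E1. unfold PL. apply (sumr_swap (ic j)).
      + intros l Hl Hl1 Hl2. rewrite H3; auto. lia.
      + exact Esum.
      + lia.
    - rewrite <- E2. unfold PR. apply (sumr_swap (ic j)).
      + intros l Hl Hl1 Hl2. rewrite H3; auto. lia.
      + exact Esum.
      + lia. }
  destruct (Hcons k ltac:(lia)) as [EL ER].
  set (ML := sumr 0 (S i) m). set (MR := sumr (S i) (n - S i) m).
  assert (HML : 0 < ML) by (apply sumr_pos; [lia| intros; apply Hm; lia]).
  assert (HMR : 0 < MR) by (apply sumr_pos; [lia| intros; apply Hm; lia]).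
  assert (A1 : v 0%nat i * ML <= PL 0%nat).
  { unfold ML, PL. rewrite <- sumr_scal. apply sumr_le. intros l Hl.
    apply Rmult_le_compat_l. pose proof (Hm l ltac:(lia)); lra.
    pose proof (Hinit2 (i - l)%nat l ltac:(lia)). replace (l + (i - l))%nat with i in H by lia. lra. }
  assert (A2 : PL k <= v k i * ML).
  { unfold ML, PL. rewrite <- sumr_scal. apply sumr_le. intros l Hl.
    apply Rmult_le_compat_l. pose proof (Hm l ltac:(lia)); lra.
    pose proof (Hfin2 (i - l)%nat l ltac:(lia)). replace (l + (i - l))%nat with i in H by lia. lra. }
  assert (A3 : PR 0%nat <= v 0%nat (S i) * MR).
  { unfold MR, PR. rewrite <- sumr_scal. apply sumr_le. intros l Hl.
    apply Rmult_le_compat_l. pose proof (Hm l ltac:(lia)); lra.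
    pose proof (Hinit2 (l - S i)%nat (S i) ltac:(lia)). replace (S i + (l - S i))%nat with l in H by lia. lra. }
  assert (A4 : v k (S i) * MR <= PR k).
  { unfold MR, PR. rewrite <- sumr_scal. apply sumr_le. intros l Hl.
    apply Rmult_le_compat_l. pose proof (Hm l ltac:(lia)); lra.
    pose proof (Hfin2 (l - S i)%nat (S i) ltac:(lia)). replace (S i + (l - S i))%nat with l in H by lia. lra. }
  pose proof (Hinit i ltac:(lia)). pose proof (Hfin i ltac:(lia)).
  assert (B1 : v 0%nat i <= v k i) by nra.
  assert (B2 : v k (S i) <= v 0%nat (S i)) by nra.
  set (c := v 0%nat i).
  assert (Hall : forall l, (l < n)%nat -> v 0%nat l = c).
  { intros l Hl. destruct (Compare_dec.le_lt_dec l i).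
    - assert (E : m l * c = m l * v 0%nat l).
      { apply (sumr_eq_le (S i) 0 (fun l => m l * c) (fun l => m l * v 0%nat l)).
        + intros l' Hl'. apply Rmult_le_compat_l. pose proof (Hm l' ltac:(lia)); lra.
          pose proof (Hinit2 (i - l')%nat l' ltac:(lia)). replace (l' + (i - l'))%nat with i in H1 by lia.
          unfold c; lra.
        + rewrite sumr_scal. fold ML. fold (PL 0%nat). unfold c in *. nra.
        + lia. }
      pose proof (Hm l Hl). apply Rmult_eq_reg_l in E; lra.
    - assert (E : m l * v 0%nat l = m l * c).
      { apply (sumr_eq_le (n - S i) (S i) (fun l => m l * v 0%nat l) (fun l => m l * c)).
        + intros l' Hl'. apply Rmult_le_compat_l. pose proof (Hm l' ltac:(lia)); lra.
          pose proof (Hinit2 (l' - S i)%nat (S i) ltac:(lia)). replace (S i + (l' - S i))%nat with l' in H1 by lia.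
          unfold c; lra.
        + rewrite sumr_scal. fold MR. fold (PR 0%nat). unfold c in *. nra.
        + lia. }
      pose proof (Hm l Hl). apply Rmult_eq_reg_l in E; lra. }
  split.
  - intros a b Ha Hb. rewrite (Hall a Ha), (Hall b Hb). reflexivity.
  - destruct k as [|k']; auto. exfalso.
    assert (Hmono : forall j, (j < S k')%nat -> tc 0%nat <= tc j).
    { induction j; intros Hj; [lra|].
      pose proof (IHj ltac:(lia)). destruct (Hord j Hj) as [|[E _]]; lra. }
    destruct (Hcol 0%nat ltac:(lia)) as (Ha & Heq & _).
    set (a := ic 0%nat) in *.
    assert (Iint : forall t, t <= tc 0%nat -> in_interval (S k') tc 0 t).
    { intros t Ht; split; auto. }
    pose proof (Hfree 0%nat a (tc 0%nat - 1) (tc 0%nat) ltac:(lia) ltac:(lia) ltac:(apply Iint; lra) ltac:(apply Iint; lra)).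
    pose proof (Hfree 0%nat (S a) (tc 0%nat - 1) (tc 0%nat) ltac:(lia) Ha ltac:(apply Iint; lra) ltac:(apply Iint; lra)).
    rewrite (Hall a ltac:(lia)) in H1. rewrite (Hall (S a) Ha) in H2.
    destruct (Htie a (tc 0%nat - 1) Ha ltac:(lra)) as [j [Hj [_ Ht]]].
    pose proof (Hmono j Hj). lra.
Qed.
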